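(* If $G$ is a clique-regular graph with respect to a clique partition $F$, then $\mathcal E(\mathcal Q_F)=\mathcal E(G)$.
   Context: All graphs are finite and simple, $V(G)=\{1,\dots,n\}$. A clique partition of $G$ is a set $F=\{C_1,\dots,C_k\}$ of cliques such that every edge lies in exactly one $C_j$. $\mathcal M_F$ is the $n\times k$ $(0,1)$-matrix with $(i,j)$-entry $1$ iff $i\in C_j$, and $\mathcal Q_F=\mathcal M_F\mathcal M_F^T$. The clique-degree $t_i^F$ is the number of cliques of $F$ containing $i$; $G$ is clique-regular if all $t_i^F$ are equal. $\mathcal E(\mathcal Q_F)=\sum_{i=1}^n|\lambda_i(\mathcal Q_F)-\bar t|$ with $\bar t=\frac1n\sum_{i=1}^n t_i^F$, and $\mathcal E(G)=\sum_{i=1}^n|\lambda_i(G)|$ is the sum of absolute values of the adjacency eigenvalues. *)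

(* Defs.v *)
From HB Require Import structures.
From mathcomp Require Import all_boot all_order all_algebra all_field.
Set Implicit Arguments. Unset Strict Implicit. Unset Printing Implicit Defensive.
Import Order.TTheory GRing.Theory Num.Theory.
Local Open Scope ring_scope.

Definition simple_graph n (e : rel 'I_n) : Prop :=
  irreflexive e /\ symmetric e.

Definition is_clique n (e : rel 'I_n) (C : {set 'I_n}) : Prop :=
  forall i j, i \in C -> j \in C -> i != j -> e i j.

Definition clique_partition n (e : rel 'I_n) (F : {set {set 'I_n}}) : Prop :=
  (forall C, C \in F -> is_clique e C) /\
  (forall i j, e i j -> #|[set C in F | (i \in C) && (j \in C)]| = 1%N).

Definition clique_degree n (F : {set {set 'I_n}}) (i : 'I_n) : nat :=
  #|[set C in F | i \in C]|.

Definition clique_regular n (F : {set {set 'I_n}}) : Prop :=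
  exists t, forall i, clique_degree F i = t.

Definition incM n (F : {set {set 'I_n}}) : 'M[algC]_(n, #|F|) :=
  \matrix_(i < n, j < #|F|) ((i \in enum_val j : bool)%:R).

Definition QF n (F : {set {set 'I_n}}) : 'M[algC]_n := incM F *m (incM F)^T.

Definition adjmx n (e : rel 'I_n) : 'M[algC]_n := \matrix_(i, j) ((e i j : bool)%:R).

Definition eigenvalues n (A : 'M[algC]_n) : seq algC :=
  sval (closed_field_poly_normal (char_poly A)).

Definition mean_clique_degree n (F : {set {set 'I_n}}) : algC :=
  (\sum_(i < n) clique_degree F i)%:R / n%:R.

Definition energyQ n (F : {set {set 'I_n}}) : algC :=
  \sum_(x <- eigenvalues (QF F)) `|x - mean_clique_degree F|.

Definition graph_energy n (e : rel 'I_n) : algC :=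
  \sum_(x <- eigenvalues (adjmx e)) `|x|.

(* Main.v *)
Require Import Defs.
From mathcomp Require Import all_boot all_order all_algebra all_field.
Set Implicit Arguments. Unset Strict Implicit. Unset Printing Implicit Defensive.
Import Order.TTheory GRing.Theory Num.Theory.
Local Open Scope ring_scope.

Lemma eig_prod n (A : 'M[algC]_n) :
  char_poly A = \prod_(z <- eigenvalues A) ('X - z%:P).
Proof.
have := svalP (closed_field_poly_normal (char_poly A)).
rewrite -/(eigenvalues A) => {1}->.
by rewrite (monicP (char_poly_monic A)) scale1r.
Qed.

Lemma char_poly_shift n (A : 'M[algC]_n) t :
  char_poly (A + t%:M) = char_poly A \Po ('X - t%:P).
Proof.
rewrite /char_poly -(det_map_mx (comp_poly ('X - t%:P))); congr (\det _).
apply/matrixP => i j; rewrite !mxE /=.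
case: (i == j) => /=; rewrite ?mulr1n ?mulr0n comp_polyB ?comp_polyX comp_polyC ?comp_poly0 ?polyCD ?addr0 ?comp_polyC.
  by rewrite opprD addrA addrAC.
by rewrite sub0r.
Qed.

Lemma eig_shift n (A : 'M[algC]_n) t :
  perm_eq (eigenvalues (A + t%:M)) (map (fun a => a + t) (eigenvalues A)).
Proof.
apply: prod_XsubC_eq; rewrite -eig_prod char_poly_shift eig_prod big_map.
rewrite rmorph_prod; apply: eq_bigr => z _.
by rewrite /= comp_polyB comp_polyX comp_polyC polyCD opprD addrA addrAC.
Qed.

Lemma QF_entry n (F : {set {set 'I_n}}) i j :
  QF F i j = (#|[set C in F | (i \in C) && (j \in C)]|)%:R.
Proof.
rewrite /QF !mxE.
pose f := fun C : {set 'I_n} => ((((i \in C) && (j \in C)) : nat)%:R : algC).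
transitivity (\sum_(C in F) f C); last first.
rewrite /f.
rewrite -natr_sum -sum1_card big_mkcond /=.
rewrite [in RHS]big_mkcond /=.
congr (_%:R); apply: eq_bigr => C _; rewrite !inE.
by case: (C \in F); case: (i \in C); case: (j \in C).
rewrite [RHS]big_enum_val; apply: eq_bigr => k _.
by rewrite !mxE /f -natrM mulnb.
Qed.

Lemma QF_eq n (e : rel 'I_n) (F : {set {set 'I_n}}) t :
  simple_graph e -> clique_partition e F -> (forall i, clique_degree F i = t) ->
  QF F = adjmx e + (t%:R)%:M.
Proof.
move=> [irr sym] [cl part] reg; apply/matrixP => i j.
rewrite QF_entry !mxE.
have [<-|nij] := eqVneq i j.
  rewrite irr /= add0r mulr1n -(reg i) /clique_degree; congr (_%:R).
  by apply: eq_card => C; rewrite !inE andbb.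
rewrite /= mulr0n addr0.
case eij: (e i j); first by rewrite part.
suff -> : [set C in F | (i \in C) && (j \in C)] = set0 by rewrite cards0.
apply/setP => C; rewrite !inE; apply/negP => /and3P [CF iC jC].
by move: (cl C CF i j iC jC nij); rewrite eij.
Qed.

Lemma size_eig n (A : 'M[algC]_n) : size (eigenvalues A) = n.
Proof.
have := size_char_poly A; rewrite eig_prod size_prod_XsubC.
by case.
Qed.

Theorem mainTheorem9 (n : nat) (e : rel 'I_n) (F : {set {set 'I_n}}) :
  simple_graph e -> clique_partition e F -> clique_regular F ->
  energyQ F = graph_energy e.
Proof.
move=> sg cp [t reg].
rewrite /energyQ /graph_energy (QF_eq sg cp reg).
case: n e F sg cp reg => [|n] e F sg cp reg.
  by rewrite !(size0nil (size_eig _)) !big_nil.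
have mean : mean_clique_degree F = t%:R.
  rewrite /mean_clique_degree (eq_bigr (fun=> t)) ?sum_nat_const ?card_ord //.
  by rewrite natrM mulrC mulKf // pnatr_eq0.
rewrite (perm_big _ (eig_shift _ _)) big_map; apply: eq_bigr => x _.
by rewrite mean addrK.
Qed.
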